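(* Let $T$ be a pruned group tree and $X$ a Polish $G_T$-space. Then there is a Borel injective map $f:X\to\mathbb{R}^T$ that is equivariant: $g\cdot f(x)=f(g\cdot x)$ for all $g\in G_T$ and $x\in X$.
   Context: Fix countable groups $(\Delta_i)_{i\in\omega}$ and let $\Delta^n=\prod_{i<n}\Delta_i$ ($\Delta^0$ trivial). A group tree is a set $T\subseteq\bigcup_n\Delta^n$ closed under initial segments such that each $T^n:=T\cap\Delta^n$ is a subgroup of $\Delta^n$; it is pruned if every element of $T$ has a proper extension in $T$. $\ell(a)$ is the length of $a\in T$, and products/inverses of tuples of equal length $n$ are taken in $T^n$. $G_T$ is the closed subgroup of $\prod_i\Delta_i$ (product of discrete groups) consisting of those $g$ with $g\upharpoonright n\in T$ for all $n$. $\mathbb{R}^T$ carries the product topology ($T$ countable), and $G_T$ acts on it by $(g\cdot\mathbf{x})(b)=\mathbf{x}((g\upharpoonright\ell(b))^{-1}\cdot b)$. A Polish $G_T$-space is a Polish space with a continuous $G_T$-action. *)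

(* Defs.v *)
From HB Require Import structures.
From mathcomp Require Import all_boot all_order all_algebra.
From mathcomp Require Import all_classical all_reals all_analysis.
From mathcomp Require Import Rstruct Rstruct_topology.
From Stdlib Require Import Rdefinitions.

Unset Printing Implicit Defensive.

Local Open Scope classical_set_scope.

Record cgroup := CGroup {
  cg_sort :> countType;
  cg_mul : cg_sort -> cg_sort -> cg_sort;
  cg_inv : cg_sort -> cg_sort;
  cg_one : cg_sort;
  cg_mulA : forall x y z, cg_mul x (cg_mul y z) = cg_mul (cg_mul x y) z;
  cg_mul1g : forall x, cg_mul cg_one x = x;
  cg_mulVg : forall x, cg_mul (cg_inv x) x = cg_one
}.
Arguments cg_mul {c}. Arguments cg_inv {c}.

Section GroupTrees.
Variable D : nat -> cgroup.

Definition tup (n : nat) := forall i : 'I_n, D i.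

Definition restr {n m : nat} (H : (m <= n)%N) (a : tup n) : tup m :=
  fun i => a (widen_ord H i).

Definition tone n : tup n := fun i => cg_one (D i).
Definition tmul {n} (a b : tup n) : tup n := fun i => cg_mul (a i) (b i).
Definition tinv {n} (a : tup n) : tup n := fun i => cg_inv (a i).

(** T is given by its levels T^n = T n, a predicate on Delta^n. *)
Definition group_tree (T : forall n, tup n -> Prop) : Prop :=
  (forall n m (H : (m <= n)%N) (a : tup n), T n a -> T m (restr H a)) /\
  (forall n, T n (tone n)) /\
  (forall n (a b : tup n), T n a -> T n b -> T n (tmul a b)) /\
  (forall n (a : tup n), T n a -> T n (tinv a)).

Definition pruned (T : forall n, tup n -> Prop) : Prop :=
  forall n (a : tup n), T n a ->
    exists m (H : (n < m)%N) (b : tup m), T m b /\ restr (ltnW H) b = a.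

Record node (T : forall n, tup n -> Prop) := Node {
  nlen : nat; ntup : tup nlen; nin : T nlen ntup }.
Arguments nlen {T}. Arguments ntup {T}. Arguments nin {T}. Arguments Node {T}.

Definition dseq := forall i : nat, D i.
Definition gres (g : dseq) n : tup n := fun i => g i.
Definition gone : dseq := fun i => cg_one (D i).
Definition gmul (g h : dseq) : dseq := fun i => cg_mul (g i) (h i).

Definition inGT (T : forall n, tup n -> Prop) (g : dseq) : Prop :=
  forall n, T n (gres g n).

Lemma node_act_in {T} (hT : group_tree T) {g} (hg : inGT T g) (b : node T) :
  T (nlen b) (tmul (tinv (gres g (nlen b))) (ntup b)).
Proof.
case: hT => _ [_ [hM hI]]; apply: hM; [apply: hI; exact: hg | exact: nin].
Qed.

Definition node_act {T} (hT : group_tree T) {g} (hg : inGT T g) (b : node T)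
  : node T := Node _ _ (node_act_in hT hg b).

Definition RT_act {T} (hT : group_tree T) {g} (hg : inGT T g)
  (x : node T -> R) : node T -> R := fun b => x (node_act hT hg b).

(** a continuous action of G_T on a topological space X, where G_T carries
    the subspace topology of the product of the discrete groups Delta_i:
    the sets {h in G_T | h|n = g|n} form a neighbourhood basis of g. *)
Definition continuous_GT_action (T : forall n, tup n -> Prop)
  (X : topologicalType) (a : dseq -> X -> X) : Prop :=
  (forall x, a gone x = x) /\
  (forall g h x, inGT T g -> inGT T h -> a (gmul g h) x = a g (a h x)) /\
  (forall g x, inGT T g -> forall U, nbhs (a g x) U ->
     exists n, exists2 V, nbhs x V &
       forall h y, inGT T h -> gres h n = gres g n -> V y -> U (a h y)).

End GroupTrees.
Arguments restr {D n m}. Arguments tone {D}. Arguments tmul {D n}. Arguments tinv {D n}.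
Arguments group_tree {D}. Arguments pruned {D}. Arguments node {D}.
Arguments nlen {D T}. Arguments ntup {D T}. Arguments nin {D T}. Arguments Node {D T}.
Arguments gres {D}. Arguments gone {D}. Arguments gmul {D}. Arguments inGT {D}.
Arguments node_act_in {D T} hT {g}. Arguments node_act {D T} hT {g}. Arguments RT_act {D T} hT {g}.
Arguments continuous_GT_action {D} T {X}.

Definition polish (X : topologicalType) : Prop :=
  (exists S : set X, countable S /\ closure S = setT) /\
  exists d : X -> X -> R,
    (forall x y, (0 <= d x y)%R) /\
    (forall x y, d x y = 0%R <-> x = y) /\
    (forall x y, d x y = d y x) /\
    (forall x y z, (d x z <= d x y + d y z)%R) /\
    (forall A : set X, open A <->
       forall x, A x -> exists2 e : R, (0 < e)%R & [set y | (d x y < e)%R] `<=` A) /\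
    (forall u : nat -> X,
       (forall e : R, (0 < e)%R -> exists N, forall m n, (N <= m)%N -> (N <= n)%N ->
          (d (u m) (u n) < e)%R) ->
       exists l : X, u @ \oo --> l).

Definition borel_fun (X Y : topologicalType) (f : X -> Y) : Prop :=
  forall U : set Y, open U -> <<s [set A : set X | open A] >> (f @^-1` U).
Arguments borel_fun {X Y}.

(* Main.v *)
Require Import Defs.
From mathcomp Require Import all_boot all_order all_algebra.
From mathcomp Require Import all_classical all_reals all_analysis.
From mathcomp Require Import Rstruct Rstruct_topology.
From Stdlib Require Import Rdefinitions Raxioms RIneq Rtrigo_def Cantor Lia Lra.

Local Open Scope classical_set_scope.


Section Borel.
Variables (X : topologicalType) (I : Type) (iota : I -> nat) (iota_inj : injective iota).
Variables (O : I -> set X) (oO : forall i, open (O i)).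

Definition indf (x : X) : {ptws I -> R} := fun i => if pselect (O i x) then 1%R else 0%R.

Definition Fl (x : X) : set_system {ptws I -> R} :=
  fun A => exists s : seq I, forall phi : {ptws I -> R},
    (forall i, List.In i s -> phi i = indf x i) -> A phi.

Lemma Fl_filter x : Filter (Fl x).
Proof.
split.
- by exists [::].
- move=> A B [s1 H1] [s2 H2]; exists (s1 ++ s2) => phi Hp; split.
  + by apply: H1 => i Hi; apply: Hp; apply: List.in_or_app; left.
  + by apply: H2 => i Hi; apply: Hp; apply: List.in_or_app; right.
- by move=> A B AB [s H]; exists s => phi Hp; apply: AB; apply: H.
Qed.

Lemma Fl_cvg x : Fl x --> (indf x : {ptws I -> R}).
Proof.
have FF := Fl_filter x.
apply/cvg_sup => i.
apply/cvg_image.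
  by apply/seteqP; split=> // r _; exists (fun _ => r).
move=> A HA /=.
exists [set phi : {ptws I -> R} | A (phi i)].
  exists [:: i] => phi Hp /=.
  have -> : phi i = indf x i by apply: Hp; left.
  exact: nbhs_singleton.
apply/seteqP; split=> r.
  by case=> phi Hphi <-.
by move=> Ar; exists (fun _ => r).
Qed.

Lemma stepA x U : open U -> U (indf x) -> exists s : seq I,
  forall y, (forall i, List.In i s -> (O i y <-> O i x)) -> U (indf y).
Proof.
move=> oU Ux.
have : nbhs (indf x : {ptws I -> R}) U by apply: open_nbhs_nbhs.
move=> /(Fl_cvg x) [s Hs].
exists s => y Hy; apply: Hs => i Hi; rewrite /indf.
case: pselect => Py; case: pselect => Px //; exfalso.
  by apply: Px; apply/(Hy i Hi).
by apply: Py; apply/(Hy i Hi).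
Qed.

Local Notation Sig := (<<s [set A : set X | open A] >>).

Lemma SigT : Sig setT.
Proof.
have := @sigma_algebraCD X setT [set A : set X | open A] set0 (@sigma_algebra0 _ _ _).
by rewrite setD0.
Qed.

Lemma SigC A : Sig A -> Sig (~` A).
Proof. by move=> HA; rewrite -setTD; apply: sigma_algebraCD. Qed.

Lemma SigU A B : Sig A -> Sig B -> Sig (A `|` B).
Proof.
move=> HA HB; rewrite -bigcup2E; apply: sigma_algebra_bigcup => -[|[|n]] //=.
exact: sigma_algebra0.
Qed.

Lemma SigI A B : Sig A -> Sig B -> Sig (A `&` B).
Proof.
move=> HA HB; rewrite -[A `&` B]setCK setCI; apply: SigC; apply: SigU; exact: SigC.
Qed.

Definition K1 (k : nat) (b : bool) : set X :=
  fun y => forall i, iota i = k -> (O i y <-> b = true).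

Definition K (L : seq (nat * bool)) : set X :=
  fun y => forall k b, List.In (k, b) L -> forall i, iota i = k -> (O i y <-> b = true).

Lemma K1_meas k b : Sig (K1 k b).
Proof.
case: (pselect (exists i, iota i = k)) => [[i0 Hi0]|Hn].
  have -> : K1 k b = if b then O i0 else ~` O i0.
    apply/seteqP; split=> y.
      move=> H; have := H i0 Hi0; case: b {H} => /= -[h1 h2].
        exact: h2.
      by move=> Oy; have := h1 Oy.
    move=> Hy i Hi; have eq : i0 = i by apply: iota_inj; rewrite Hi Hi0.
    subst i0; move: Hy; case: b => /= Hy.
      by split.
    by split=> // Oy; exfalso; exact: Hy Oy.
  case: b; first by apply: sub_sigma_algebra; exact: oO.
  by apply: SigC; apply: sub_sigma_algebra; exact: oO.
have -> : K1 k b = setT.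
  apply/seteqP; split=> // y _ i Hi; exfalso; apply: Hn; by exists i.
exact: SigT.
Qed.

Lemma K_meas L : Sig (K L).
Proof.
elim: L => [|[k b] L IH].
  have -> : K [::] = setT by apply/seteqP; split=> // y _ k b [].
  exact: SigT.
have -> : K ((k, b) :: L) = K1 k b `&` K L.
  apply/seteqP; split=> y.
    move=> H; split.
      by move=> i Hi; apply: (H k b) => //; left.
    by move=> k' b' Hin; apply: H; right.
  case=> H1 H2 k' b' [E|Hin].
    by case: E => <- <-; exact: H1.
  exact: H2.
apply: SigI => //; exact: K1_meas.
Qed.

Lemma borel_indf : borel_fun indf.
Proof.
move=> U oU.
pose P := fun n : nat => match (unpickle n : option (seq (nat * bool))) with
  | Some L => if pselect (K L `<=` indf @^-1` U) then K L else set0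
  | None => set0 end.
have -> : indf @^-1` U = \bigcup_n P n.
  apply/seteqP; split => [x Ux | x [n _]].
    have [s Hs] := @stepA x U oU Ux.
    pose L := map (fun i => (iota i, `[< O i x >])) s.
    have KL : K L x.
      move=> k b /List.in_map_iff [j [E Hj]] i Hi.
      case: E => Ek Eb; subst k b.
      have eij : j = i by apply: iota_inj.
      subst j; split; [by move=> Ox; apply/asboolP | by move/asboolP].
    have sub : K L `<=` indf @^-1` U.
      move=> y Ky; apply: Hs => i Hi.
      have := Ky (iota i) `[< O i x >] _ i erefl.
      case.
        by apply/List.in_map_iff; exists i.
      move=> h1 h2; split => [Oy|Ox]; first by apply/asboolP; exact: h1.
      by apply: h2; exact/asboolP.
    exists (pickle L) => //; rewrite /P pickleK.
    by case: pselect => H /=.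
  rewrite /P; case: (unpickle n) => [L|] //; case: pselect => H /= Kx; [exact: H | case: Kx].
apply: sigma_algebra_bigcup => n; rewrite /P; case: (unpickle n) => [L|].
  by case: pselect => H /=; [exact: K_meas | exact: sigma_algebra0].
exact: sigma_algebra0.
Qed.

End Borel.



Section Grp.
Variable G : cgroup.

Lemma cg_mulgV (x : G) : cg_mul x (cg_inv x) = cg_one G.
Proof.
have e1 : cg_mul x (cg_inv x) =
  cg_mul (cg_mul (cg_inv (cg_inv x)) (cg_inv x)) (cg_mul x (cg_inv x)).
  by rewrite cg_mulVg cg_mul1g.
by rewrite e1 -cg_mulA (cg_mulA _ (cg_inv x) x) cg_mulVg cg_mul1g cg_mulVg.
Qed.

Lemma cg_mulg1 (x : G) : cg_mul x (cg_one G) = x.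
Proof. by rewrite -(cg_mulVg _ x) cg_mulA cg_mulgV cg_mul1g. Qed.

Lemma cg_invU (x y : G) : cg_mul y x = cg_one G -> y = cg_inv x.
Proof.
move=> H; rewrite -(cg_mulg1 y) -(cg_mulgV x) cg_mulA H cg_mul1g //.
Qed.

Lemma cg_inv1 : cg_inv (cg_one G) = cg_one G.
Proof. by symmetry; apply: cg_invU; rewrite cg_mul1g. Qed.

Lemma cg_invK (x : G) : cg_inv (cg_inv x) = x.
Proof. by symmetry; apply: cg_invU; rewrite cg_mulgV. Qed.

Lemma cg_invM (x y : G) : cg_inv (cg_mul x y) = cg_mul (cg_inv y) (cg_inv x).
Proof.
symmetry; apply: cg_invU.
by rewrite -cg_mulA (cg_mulA _ (cg_inv x) x) cg_mulVg cg_mul1g cg_mulVg.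
Qed.
End Grp.

Section Act.
Variables (D : nat -> cgroup) (T : forall n, tup D n -> Prop) (hT : group_tree T).
Variables (X : topologicalType) (a : dseq D -> X -> X) (ha : continuous_GT_action T a).

Definition ginv (g : dseq D) : dseq D := fun i => cg_inv (g i).

Lemma inGT_mul (g h : dseq D) : inGT T g -> inGT T h -> inGT T (gmul g h).
Proof. case: hT => _ [_ [hM _]] hg hh n; exact: (hM n _ _ (hg n) (hh n)). Qed.

Lemma inGT_inv (g : dseq D) : inGT T g -> inGT T (ginv g).
Proof. case: hT => _ [_ [_ hI]] hg n; exact: (hI n _ (hg n)). Qed.

Lemma inGT_one : inGT T (@gone D).
Proof. case: hT => _ [h1 _] n; exact: (h1 n). Qed.

Lemma act_mul (g h : dseq D) x : inGT T g -> inGT T h -> a g (a h x) = a (gmul g h) x.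
Proof. by case: ha => _ [hm _] hg hh; rewrite hm. Qed.

Lemma gmulVg (g : dseq D) : gmul (ginv g) g = @gone D.
Proof. apply: functional_extensionality_dep => i; exact: cg_mulVg. Qed.

Lemma gmulgV (g : dseq D) : gmul g (ginv g) = @gone D.
Proof. apply: functional_extensionality_dep => i; exact: cg_mulgV. Qed.

Lemma gmulA (g h k : dseq D) : gmul g (gmul h k) = gmul (gmul g h) k.
Proof. apply: functional_extensionality_dep => i; exact: cg_mulA. Qed.

Lemma gmulg1 (g : dseq D) : gmul g (@gone D) = g.
Proof. apply: functional_extensionality_dep => i; exact: cg_mulg1. Qed.

Variable W : nat -> set X.

Definition Ofam n (c : tup D n) : set X :=
  fun x => exists h, inGT T h /\ gres h n = tinv c /\ W n (a h x).

Lemma Oequiv n (c : tup D n) (g : dseq D) x : inGT T g ->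
  (Ofam n (tmul (tinv (gres g n)) c) x <-> Ofam n c (a g x)).
Proof.
move=> hg; split.
- case=> h [hh [Eh Wh]].
  exists (gmul h (ginv g)); split; first by apply: inGT_mul => //; exact: inGT_inv.
  split.
    apply: functional_extensionality_dep => i.
    have := congr1 (fun t => t i) Eh; rewrite /gres /tinv /tmul /gmul /ginv /= => ->.
    by rewrite cg_invM cg_invK -cg_mulA cg_mulgV cg_mulg1.
  have hi : inGT T (ginv g) by exact: inGT_inv.
  have hhi : inGT T (gmul h (ginv g)) by exact: inGT_mul.
  rewrite act_mul //.
  by rewrite -gmulA gmulVg gmulg1.
- case=> h [hh [Eh Wh]].
  exists (gmul h g); split; first exact: inGT_mul.
  split.
    apply: functional_extensionality_dep => i.
    have := congr1 (fun t => t i) Eh; rewrite /gres /tinv /tmul /gmul /ginv /= => ->.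
    by rewrite cg_invM cg_invK.
  by rewrite -act_mul.
Qed.

Lemma Ofam_open n (c : tup D n) : open (W n) -> open (Ofam n c).
Proof.
move=> oW; rewrite openE => x [h [hh [Eh Wh]]].
case: ha => _ [_ hc].
have : nbhs (a h x) (W n) by apply: open_nbhs_nbhs; split.
case/(hc h x hh) => m [V nV HV].
rewrite /interior /=.
apply: filterS nV => y Vy; exists h; split=> //; split=> //.
exact: HV h y hh erefl Vy.
Qed.

End Act.



Definition node_code (D : nat -> cgroup) (T : forall n, tup D n -> Prop) (b : node T) : nat :=
  pickle (nlen b, [seq pickle (ntup b o) | o <- enum 'I_(nlen b)]).

Lemma node_code_inj (D : nat -> cgroup) (T : forall n, tup D n -> Prop) :
  injective (node_code D T).
Proof.
case=> n1 c1 p1 [n2 c2 p2] E.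
have E' := pcan_inj pickleK E.
have En := congr1 fst E'; simpl in En; subst n2.
have El : [seq pickle (c1 o) | o <- enum 'I_n1] = [seq pickle (c2 o) | o <- enum 'I_n1]
    := congr1 snd E'.
have Ec : c1 = c2.
  apply: functional_extensionality_dep => o.
  have := (iffRL (eq_in_map _ _ _) El) o; rewrite mem_enum => /(_ isT).
  exact: (pcan_inj pickleK).
subst c2; congr Node; exact: Prop_irrelevance.
Qed.

Theorem mainTheorem12 (D : nat -> cgroup) (T : forall n, tup D n -> Prop)
  (hT : group_tree T) (hP : pruned T)
  (X : topologicalType) (a : dseq D -> X -> X)
  (hX : polish X) (ha : continuous_GT_action T a) :
  exists f : X -> {ptws node T -> R},
    borel_fun f /\ injective f /\
    (forall (g : dseq D) (hg : inGT T g) (x : X),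
       RT_act hT hg (f x) = f (a g x)).
Proof.
case: hX => [[S [cS dS]] [d [d0 [deq [dsym [dtri [dopen _]]]]]]].
case/countable_injP: cS => io ioinj.
pose r (j : nat) : R := (/ INR j.+1)%R.
have r0 j : (0 < r j)%R by apply: Rinv_0_lt_compat; apply: lt_0_INR; lia.
pose W (n : nat) : set X := fun z => exists s, S s /\
   io s = (Cantor.of_nat (Cantor.of_nat n).2).1 /\
   (d s z < r (Cantor.of_nat (Cantor.of_nat n).2).2)%R.
have ball_open : forall s (e : R), open [set z | (d s z < e)%R].
  move=> s e; apply/dopen => z /= Hz; exists (e - d s z)%R; first lra.
  move=> y /= Hy; have := dtri s z y; lra.
have W_open : forall n, open (W n).
  move=> n; apply/dopen => z [s [Ss [Es Hs]]].
  exists (r (Cantor.of_nat (Cantor.of_nat n).2).2 - d s z)%R; first lra.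
  move=> y /= Hy; exists s; split=> //; split=> //; have := dtri s z y; lra.
pose O' := fun b : node T => Ofam D T X a W (nlen b) (ntup b).
exists (indf X (node T) O').
split.
  apply: (@borel_indf X (node T) (node_code D T) (@node_code_inj D T) O') => b.
  exact: Ofam_open.
split; last first.
  move=> g hg x; apply: functional_extensionality_dep => b.
  rewrite /RT_act /indf /O' /=.
  have E := @Oequiv D T hT X a ha W _ (ntup b) g x hg.
  case: pselect => H1; case: pselect => H2 //; exfalso.
    by apply: H2; apply/E.
  by apply: H1; apply/E.
move=> x y Exy; case: (pselect (x = y)) => // Hne; exfalso.
have dxx : forall z, d z z = 0%R by move=> z; apply/deq.
have dpos : (0 < d x y)%R.
  have := d0 x y; have : d x y <> 0%R by move/deq.
  lra.
pose Ux := [set z | (d x z < d x y)%R].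
have [ha1 [ha2 hc]] := ha.
have nUx : nbhs (a (@gone D) x) Ux.
  rewrite ha1; apply: open_nbhs_nbhs; split; first exact: ball_open.
  by rewrite /Ux /= dxx.
have [m [V nV HV]] := hc (@gone D) x (inGT_one D T hT) Ux nUx.
move: nV; rewrite nbhsE /= => -[B [oB Bx] BV].
have [e e0 He] := (dopen B).1 oB x Bx.
have [N [HN N0]] := archimed_cor1 (e / 2) ltac:(lra).
pose j := N.-1.
have Hj : (r j + r j <= e)%R.
  rewrite /r /j prednK; last by apply/ltP.
  lra.
have [s [Ss Hs]] : exists s, S s /\ (d x s < r j)%R.
  have : closure S x by rewrite dS.
  move/(_ [set z | (d x z < r j)%R]).
  case.
    apply: open_nbhs_nbhs; split; first exact: ball_open.
    by rewrite /= dxx.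
  by move=> s [Ss Hs]; exists s.
pose k := io s.
pose n := Cantor.to_nat (m, Cantor.to_nat (k, j)).
have Hn1 : Cantor.of_nat n = (m, Cantor.to_nat (k, j)) := Cantor.cancel_of_to _.
have Hn2 : Cantor.of_nat (Cantor.to_nat (k, j)) = (k, j) := Cantor.cancel_of_to _.
have Hmn : (m <= n)%N.
  apply/leP; have := Cantor.to_nat_non_decreasing m (Cantor.to_nat (k, j)); lia.
have Tn : T n (tone n) by case: hT => _ [h1 _]; exact: h1.
pose b := @Node D T n (tone n) Tn.
have Hx : Ofam D T X a W n (tone n) x.
  exists (@gone D); split; first exact: (inGT_one D T hT).
  split.
    apply: functional_extensionality_dep => i.
    by rewrite /gres /tinv /tone /= cg_inv1.
  rewrite ha1 /W Hn1 /= Hn2 /=; exists s; split=> //; split=> //.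
  by rewrite dsym.
have Hy : ~ Ofam D T X a W n (tone n) y.
  case=> h [hh [Eh Wh]].
  move: Wh; rewrite /W Hn1 /= Hn2 /= => -[s' [Ss' [Es' Hs']]].
  have es : s' = s by apply: ioinj; rewrite ?in_setE.
  subst s'.
  have Bah : B (a h y).
    apply: He; rewrite /=; have := dtri x s (a h y); lra.
  have Eg : gres (ginv D h) m = gres (@gone D) m.
    apply: functional_extensionality_dep => o.
    have := congr1 (fun t => t (widen_ord Hmn o)) Eh.
    rewrite /gres /tinv /tone /ginv /= => ->.
    by rewrite cg_invK.
  have := HV (ginv D h) (a h y) (inGT_inv D T hT h hh) Eg (BV _ Bah).
  rewrite (act_mul D T X a ha) //; last exact: (inGT_inv D T hT h hh).
  rewrite gmulVg ha1 /Ux /=.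
  lra.
have := congr1 (fun F => F b) Exy.
rewrite /indf /O' /=.
case: pselect => H1 /=; last by exfalso; apply: H1.
case: pselect => H2 /=; first by exfalso; apply: Hy.
exact: R1_neq_R0.
Qed.
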